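(* Let $(Z,\to)$, $R$ and $H$ be as in the context. Then (i) $H=\mathrm{Aut}(Z,R)$; and (ii) the structure $(Z,R)$ is homogeneous, i.e. every isomorphism between finite substructures of $(Z,R)$ extends to an automorphism of $(Z,R)$.
   Context: Let $Z$ be a countable dense subset of the unit circle containing no two antipodal points, and for distinct $x,y\in Z$ put $x\to y$ iff the clockwise distance from $x$ to $y$ along the circle is less than the anticlockwise distance (this tournament is the countable dense local order). Define a ternary relation $R$ on $Z$ by $R(x;y,z)$ iff $(y\to x\wedge y\to z\wedge x\to z)\vee(z\to x\wedge z\to y\wedge x\to y)$. Let $H$ be the group of all permutations $g$ of $Z$ that either preserve $\to$ (automorphisms) or reverse it (i.e. $x\to y$ iff $y^g\to x^g$ for all distinct $x,y$). *)

(* Defs.v *)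
From Stdlib Require Import Reals List.
Open Scope R_scope.

(* The unit circle is parametrised by t in [0,1) via
   t |-> (cos (2 pi t), sin (2 pi t)); angles increase anticlockwise.
   A subset of the circle is thus a predicate Zs on R contained in [0,1). *)

Definition cw_dist (x y : R) : R := frac_part (x - y).
Definition acw_dist (x y : R) : R := frac_part (y - x).

Definition pts (Zs : R -> Prop) : Type := {t : R | Zs t}.

Definition arr {Zs : R -> Prop} (x y : pts Zs) : Prop :=
  cw_dist (proj1_sig x) (proj1_sig y) < acw_dist (proj1_sig x) (proj1_sig y).

Definition Rel {Zs : R -> Prop} (x y z : pts Zs) : Prop :=
  (arr y x /\ arr y z /\ arr x z) \/ (arr z x /\ arr z y /\ arr x y).

Definition on_circle (Zs : R -> Prop) : Prop :=
  forall t, Zs t -> 0 <= t < 1.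
Definition countable_set (Zs : R -> Prop) : Prop :=
  exists f : pts Zs -> nat, forall x y, f x = f y -> x = y.
Definition dense_in_circle (Zs : R -> Prop) : Prop :=
  forall a b, 0 <= a < b /\ b <= 1 -> exists t, Zs t /\ a < t < b.
Definition no_antipodal (Zs : R -> Prop) : Prop :=
  forall s t, Zs s -> Zs t -> s <> frac_part (t + / 2).

Definition is_perm {Zs : R -> Prop} (g : pts Zs -> pts Zs) : Prop :=
  exists h : pts Zs -> pts Zs, (forall x, h (g x) = x) /\ (forall x, g (h x) = x).

Definition in_H {Zs : R -> Prop} (g : pts Zs -> pts Zs) : Prop :=
  is_perm g /\
  ((forall x y, x <> y -> (arr x y <-> arr (g x) (g y))) \/
   (forall x y, x <> y -> (arr x y <-> arr (g y) (g x)))).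

Definition is_autR {Zs : R -> Prop} (g : pts Zs -> pts Zs) : Prop :=
  is_perm g /\ (forall x y z, Rel x y z <-> Rel (g x) (g y) (g z)).

Definition fin_partial_iso {Zs : R -> Prop} (l : list (pts Zs))
    (f : pts Zs -> pts Zs) : Prop :=
  (forall x y, In x l -> In y l -> f x = f y -> x = y) /\
  (forall x y z, In x l -> In y l -> In z l ->
     (Rel x y z <-> Rel (f x) (f y) (f z))).

(* Main.v *)
Require Import Defs.
From Stdlib Require Import Reals List Lra Lia Classical ClassicalEpsilon ProofIrrelevance PropExtensionality Bool.
Open Scope R_scope.

Lemma frac_pos r : 0 <= r < 1 -> frac_part r = r.
Proof.
  intros H. unfold frac_part, Int_part.
  assert (up r = 1%Z) as E by (symmetry; apply tech_up; simpl; lra).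
  rewrite E. simpl. lra.
Qed.

Lemma frac_neg r : -1 <= r < 0 -> frac_part r = r + 1.
Proof.
  intros H. unfold frac_part, Int_part.
  assert (up r = 0%Z) as E by (symmetry; apply tech_up; simpl; lra).
  rewrite E. simpl. lra.
Qed.

Definition arrR (r s : R) : Prop := frac_part (r - s) < frac_part (s - r).

Lemma arr_char r s : 0 <= r < 1 -> 0 <= s < 1 ->
  (arrR r s <-> (s < r /\ r - s < 1/2) \/ (r < s /\ s - r > 1/2)).
Proof.
  intros Hr Hs. unfold arrR.
  destruct (Rlt_dec r s) as [H|H].
  - rewrite (frac_neg (r - s)) by lra. rewrite (frac_pos (s - r)) by lra. split; intros; lra.
  - destruct (Req_dec r s) as [E|E].
    + subst. replace (s - s) with 0 by lra. split; intros; lra.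
    + rewrite (frac_pos (r - s)) by lra. rewrite (frac_neg (s - r)) by lra. split; intros; lra.
Qed.

Definition na (r s : R) : Prop := r - s <> 1/2 /\ r - s <> -(1/2).

Lemma arr_tour r s : 0 <= r < 1 -> 0 <= s < 1 -> r <> s -> na r s ->
  (arrR r s <-> ~ arrR s r).
Proof.
  intros Hr Hs Hne [N1 N2]. rewrite !arr_char by auto.
  split; intros; lra.
Qed.

Lemma arr_irr r : 0 <= r < 1 -> ~ arrR r r.
Proof. intros Hr. rewrite arr_char by auto. lra. Qed.

Definition Vf (t : R) : R := if Rlt_dec t (1/2) then 2*t else 2*t-1.
Definition Df (t : R) : bool := if Rlt_dec t (1/2) then false else true.

Lemma Vf_range t : 0 <= t < 1 -> 0 <= Vf t < 1.
Proof. intros. unfold Vf. destruct (Rlt_dec t (1/2)); lra. Qed.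

Lemma Vf_inj r s : 0 <= r < 1 -> 0 <= s < 1 -> r <> s -> na r s -> Vf r <> Vf s.
Proof.
  intros Hr Hs Hne [N1 N2]. unfold Vf.
  destruct (Rlt_dec r (1/2)); destruct (Rlt_dec s (1/2)); intro; lra.
Qed.

Lemma iff_true_eq (Q : Prop) (b : bool) : (Q <-> b = b) <-> Q.
Proof. tauto. Qed.
Lemma iff_ft (Q : Prop) : (Q <-> false = true) <-> ~ Q.
Proof. split; intros H; [intro q; apply H in q; discriminate | split; intro; [contradiction | discriminate]]. Qed.
Lemma iff_tf (Q : Prop) : (Q <-> true = false) <-> ~ Q.
Proof. split; intros H; [intro q; apply H in q; discriminate | split; intro; [contradiction | discriminate]]. Qed.

Lemma arr_F r s : 0 <= r < 1 -> 0 <= s < 1 -> r <> s -> na r s ->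
  (arrR r s <-> (Vf s < Vf r <-> Df r = Df s)).
Proof.
  intros Hr Hs Hne [N1 N2]. rewrite arr_char by auto. unfold Vf, Df.
  destruct (Rlt_dec r (1/2)); destruct (Rlt_dec s (1/2));
  rewrite ?iff_true_eq, ?iff_ft, ?iff_tf; split; intros; lra.
Qed.

Lemma K_logic (u1 u2 v1 v2 : R) (c1 c2 d1 d2 : bool): u1<>u2 -> v1<>v2 ->
  ((u2<u1 <-> c1=c2) <-> (v2 < v1 <-> d1 = d2)) ->
  (v1 < v2 <-> (u1 < u2 <-> Bool.eqb c1 d1 = Bool.eqb c2 d2)).
Proof.
  intros Hu Hv H.
  destruct (Rlt_dec u1 u2); destruct (Rlt_dec v1 v2);
  destruct c1, c2, d1, d2; simpl in *;
  split; intros; try split; intros; try discriminate; try lra;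
  try (exfalso; destruct H as [H1 H2];
       first [ assert (false = true) by (apply H2; split; intros; first [discriminate | lra | reflexivity]); discriminate
             | assert (true = false) by (apply H2; split; intros; first [discriminate | lra | reflexivity]); discriminate
             | assert (false = true) by (apply H1; split; intros; first [discriminate | lra | reflexivity]); discriminate
             | assert (true = false) by (apply H1; split; intros; first [discriminate | lra | reflexivity]); discriminate
             | assert (v2 < v1) by (apply H1; split; intros; first [discriminate | lra | reflexivity]); lra
             | assert (u2 < u1) by (apply H2; split; intros; first [discriminate | lra | reflexivity]); lra ]).
Qed.

Section CLs.
Context {T : Type} (S : T -> Prop) (U V : T -> R) (tau : T -> bool)
 (HK : forall p q, S p -> S q -> p <> q -> U p <> U q /\ V p <> V q /\ (V p < V q <-> (U p < U q <-> tau p = tau q))).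

Lemma CL_mono a b c : S a -> S b -> S c -> U a < U b -> U b < U c -> tau a = tau c -> tau a <> tau b -> False.
Proof.
  intros Sa Sb Sc H1 H2 E N.
  assert (a <> b) by (intro; subst; lra).
  assert (b <> c) by (intro; subst; lra).
  assert (a <> c) by (intro; subst; lra).
  destruct (HK a b Sa Sb H) as [_ [Vab Kab]].
  destruct (HK b c Sb Sc H0) as [_ [Vbc Kbc]].
  destruct (HK a c Sa Sc H3) as [_ [Vac Kac]].
  assert (~ V a < V b) by (intro Q; apply Kab in Q; apply N, Q; exact H1).
  assert (~ V b < V c) by (intro Q; apply Kbc in Q; apply N; rewrite E; symmetry; apply Q; exact H2).
  assert (V a < V c) by (apply Kac; split; intros; auto; lra).
  lra.
Qed.

Lemma CL :
 (forall p q, S p -> S q -> tau p = false -> tau q = true -> V p < V q) \/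
 (forall p q, S p -> S q -> tau p = true -> tau q = false -> V p < V q).
Proof.
  destruct (classic (forall p q, S p -> S q -> tau p = false -> tau q = true -> V p < V q)) as [H|H]; [left; exact H|right].
  intros k l Sk Sl Tk Tl.
  apply not_all_ex_not in H as [i H]. apply not_all_ex_not in H as [j H].
  apply imply_to_and in H as [Si H]. apply imply_to_and in H as [Sj H].
  apply imply_to_and in H as [Ti H]. apply imply_to_and in H as [Tj H].
  assert (i <> j) by (intro; subst; congruence).
  assert (k <> l) by (intro; subst; congruence).
  destruct (HK i j Si Sj H0) as [Uij [Vij Kij]].
  destruct (HK k l Sk Sl H1) as [Ukl [Vkl Kkl]].
  destruct (Rlt_dec (V k) (V l)) as [Q|Q]; [exact Q|exfalso].
  assert (Ui : U i < U j).
  { destruct (Rlt_dec (U i) (U j)) as [W|W]; auto.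
    exfalso; apply H. apply Kij. split; intro; [lra | rewrite Ti, Tj in *; discriminate]. }
  assert (Uk : U k < U l).
  { destruct (Rlt_dec (U k) (U l)) as [W|W]; auto.
    exfalso. assert (V l < V k) by lra.
    destruct (HK l k Sl Sk (not_eq_sym H1)) as [_ [_ Klk]].
    apply Klk in H2. assert (U l < U k) by lra. apply H2 in H3. congruence. }
  assert (i <> k) by (intro; subst; congruence).
  destruct (HK i k Si Sk H2) as [Uik _].
  destruct (Rlt_dec (U i) (U k)) as [W|W].
  - apply (CL_mono i k l); auto; congruence.
  - apply (CL_mono k i j); auto; try lra; congruence.
Qed.
End CLs.

Lemma IL {T} (ps : list T) (V : T -> R) (low : T -> Prop)
 (Hr : forall p, In p ps -> 0 <= V p < 1)
 (Hsep : forall p q, In p ps -> In q ps -> low p -> ~ low q -> V p < V q)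
 (Hpos : forall q, In q ps -> ~ low q -> 0 < V q) :
 exists L U, 0 <= L < U /\ U <= 1 /\ forall p, In p ps -> (low p -> V p <= L) /\ (~ low p -> U <= V p).
Proof.
  assert (G: exists L U, 0 <= L < U /\ U <= 1 /\ (forall p, In p ps -> (low p -> V p <= L) /\ (~ low p -> U <= V p))
    /\ (L = 0 \/ exists p0, In p0 ps /\ low p0 /\ L = V p0) /\ (U = 1 \/ exists q0, In q0 ps /\ ~low q0 /\ U = V q0)).
  2:{ destruct G as [L [U [A [B [C _]]]]]. exists L, U. auto. }
  induction ps as [|a ps IH].
  - exists 0, 1. split; [lra|split; [lra|split; [intros p0 Hp0; destruct Hp0|split; left; reflexivity]]].
  - destruct IH as [L [U [A [B [C [DL DU]]]]]].
    + intros; apply Hr; simpl; auto.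
    + intros; apply Hsep; simpl; auto.
    + intros; apply Hpos; simpl; auto.
    + destruct (classic (low a)) as [La|La].
      * exists (Rmax L (V a)), U.
        assert (V a < U).
        { destruct DU as [E|[q [Hq [Lq E]]]].
          - subst. apply Hr; simpl; auto.
          - subst. apply Hsep; simpl; auto. }
        pose proof (Hr a (or_introl eq_refl)).
        split; [split; [apply Rmax_case_strong; intros; lra|apply Rmax_case_strong; intros; lra]|].
        split; [lra|]. split; [intros p Hp; split; intros Lp; destruct Hp as [<-|Hp]|split].
        -- apply Rmax_r.
        -- apply (proj1 (C p Hp)) in Lp. pose proof (Rmax_l L (V a)). lra.
        -- contradiction.
        -- apply (proj2 (C p Hp)) in Lp. lra.
        -- apply Rmax_case_strong; intros.
           ++ destruct DL as [E|[p [Hp [Lp E]]]]; [left; auto | right; exists p; simpl; auto].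
           ++ right. exists a. simpl. auto.
        -- destruct DU as [E|[q [Hq [Lq E]]]]; [left; auto | right; exists q; simpl; auto].
      * exists L, (Rmin U (V a)).
        assert (L < V a).
        { destruct DL as [E|[p [Hp [Lp E]]]].
          - subst. apply Hpos; simpl; auto.
          - subst. apply Hsep; simpl; auto. }
        pose proof (Hr a (or_introl eq_refl)).
        split; [split; [lra|apply Rmin_case_strong; intros; lra]|].
        split; [apply Rmin_case_strong; intros; lra|]. split; [intros p Hp; split; intros Lp; destruct Hp as [<-|Hp]|split].
        -- contradiction.
        -- apply (proj1 (C p Hp)) in Lp. lra.
        -- apply Rmin_r.
        -- apply (proj2 (C p Hp)) in Lp. pose proof (Rmin_l U (V a)). lra.
        -- destruct DL as [E|[p [Hp [Lp E]]]]; [left; auto | right; exists p; simpl; auto].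
        -- apply Rmin_case_strong; intros.
           ++ destruct DU as [E|[q [Hq [Lq E]]]]; [left; auto | right; exists q; simpl; auto].
           ++ right. exists a. simpl. auto.
Qed.

Definition delta x a := if Rle_dec x a then a - x else a - x + 1.

Lemma delta_range x a : 0 <= x < 1 -> 0 <= a < 1 -> 0 <= delta x a < 1.
Proof. intros. unfold delta. destruct (Rle_dec x a); lra. Qed.

Lemma delta_pos x a : 0 <= x < 1 -> 0 <= a < 1 -> a <> x -> 0 < delta x a.
Proof. intros. unfold delta. destruct (Rle_dec x a); lra. Qed.

Lemma rot x a b : 0 <= x < 1 -> 0 <= a < 1 -> 0 <= b < 1 ->
  (arrR a b <-> arrR (delta x a) (delta x b)).
Proof.
  intros. rewrite !arr_char by (auto; apply delta_range; auto).
  unfold delta. destruct (Rle_dec x a); destruct (Rle_dec x b); split; intros; lra.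
Qed.

Lemma delta_na x a b : 0 <= x < 1 -> 0 <= a < 1 -> 0 <= b < 1 -> a <> b -> na a b ->
  delta x a <> delta x b /\ na (delta x a) (delta x b).
Proof.
  intros Hx Ha Hb N [N1 N2]. unfold na, delta.
  destruct (Rle_dec x a); destruct (Rle_dec x b); repeat split; intro; lra.
Qed.

Lemma arr_to_x x a : 0 <= x < 1 -> 0 <= a < 1 -> a <> x ->
  (arrR a x <-> Df (delta x a) = false).
Proof.
  intros Hx Ha N. rewrite (rot x) by auto.
  assert (delta x x = 0) as E by (unfold delta; destruct (Rle_dec x x); lra).
  rewrite E. pose proof (delta_pos x a Hx Ha N). pose proof (delta_range x a Hx Ha).
  rewrite arr_char by lra. unfold Df.
  destruct (Rlt_dec (delta x a) (1/2)); split; intros; try lra; try discriminate; auto.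
Qed.

Lemma na_sym a b : na a b -> na b a.
Proof. unfold na. intros [H1 H2]. split; intro; lra. Qed.

Lemma ExtL (Z2 : R -> Prop) (HZ2 : forall t, Z2 t -> 0 <= t < 1) (Hd2 : dense_in_circle Z2)
 (Hna2 : forall s t, Z2 s -> Z2 t -> s <> t -> na s t)
 (ps : list (R*R)) (x : R) (Hx : 0 <= x < 1)
 (Hsrc : forall p, In p ps -> 0 <= fst p < 1 /\ Z2 (snd p))
 (Hsna : forall p q, In p ps -> In q ps -> fst p <> fst q -> na (fst p) (fst q))
 (Hxna : forall p, In p ps -> fst p <> x -> na (fst p) x)
 (Heq : forall p q, In p ps -> In q ps -> (fst p = fst q <-> snd p = snd q))
 (Harr : forall p q, In p ps -> In q ps -> (arrR (fst p)(fst q) <-> arrR (snd p)(snd q))) :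
 exists y, Z2 y /\ forall p, In p ps -> (fst p = x <-> snd p = y) /\
   (arrR (fst p) x <-> arrR (snd p) y) /\ (arrR x (fst p) <-> arrR y (snd p)).
Proof.
  destruct (classic (exists p0, In p0 ps /\ fst p0 = x)) as [[p0 [Hp0 E]]|Nx].
  { exists (snd p0). split; [apply Hsrc; auto|]. intros p Hp. subst x.
    split; [apply Heq; auto|]. split; apply Harr; auto. }
  assert (Nx' : forall p, In p ps -> fst p <> x) by (intros p Hp E; apply Nx; eauto).
  set (Uf := fun p : R*R => Vf (delta x (fst p))).
  set (Vq := fun p : R*R => Vf (snd p)).
  set (tau := fun p : R*R => Bool.eqb (Df (delta x (fst p))) (Df (snd p))).
  assert (Hneq : forall p q, In p ps -> In q ps -> p <> q -> fst p <> fst q).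
  { intros [a b] [a' b'] Hp Hq N E. apply N. pose proof (proj1 (Heq _ _ Hp Hq) E).
    simpl in *. subst. reflexivity. }
  assert (HK : forall p q, In p ps -> In q ps -> p <> q ->
     Uf p <> Uf q /\ Vq p <> Vq q /\ (Vq p < Vq q <-> (Uf p < Uf q <-> tau p = tau q))).
  { intros p q Hp Hq N.
    pose proof (Hneq p q Hp Hq N) as Nf.
    assert (Ns : snd p <> snd q) by (intro E; apply Nf; apply (Heq p q Hp Hq); auto).
    destruct (Hsrc p Hp) as [Rp Zp]. destruct (Hsrc q Hq) as [Rq Zq].
    pose proof (HZ2 _ Zp). pose proof (HZ2 _ Zq).
    destruct (delta_na x (fst p) (fst q) Hx Rp Rq Nf (Hsna p q Hp Hq Nf)) as [Dn Dna].
    pose proof (delta_range x (fst p) Hx Rp). pose proof (delta_range x (fst q) Hx Rq).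
    assert (U1 : Uf p <> Uf q) by (apply Vf_inj; auto).
    assert (V1 : Vq p <> Vq q) by (apply Vf_inj; auto).
    split; [exact U1|split; [exact V1|]].
    apply K_logic; auto.
    pose proof (Harr p q Hp Hq) as Ha.
    rewrite (rot x (fst p) (fst q) Hx Rp Rq) in Ha.
    rewrite arr_F in Ha by auto. rewrite (arr_F (snd p)) in Ha by auto.
    exact Ha. }
  assert (Fin : forall Dy : bool,
    (forall p q, In p ps -> In q ps -> tau p = Dy -> tau q <> Dy -> Vq p < Vq q) ->
    (forall q, In q ps -> tau q <> Dy -> 0 < Vq q) ->
    exists y, Z2 y /\ forall p, In p ps -> (fst p = x <-> snd p = y) /\
     (arrR (fst p) x <-> arrR (snd p) y) /\ (arrR x (fst p) <-> arrR y (snd p))).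
  { intros Dy Hsep Hpos.
    assert (Hr : forall p, In p ps -> 0 <= Vq p < 1).
    { intros p Hp. apply Vf_range. apply HZ2. apply Hsrc; auto. }
    destruct (IL ps Vq (fun p => tau p = Dy) Hr Hsep Hpos) as [L [U [HLU [HU HC]]]].
    destruct (Hd2 ((L + if Dy then 1 else 0)/2) ((U + if Dy then 1 else 0)/2)) as [t [Zt Ht]].
    { destruct Dy; lra. }
    assert (Vt : L < Vf t < U /\ Df t = Dy).
    { unfold Vf, Df. destruct Dy; destruct (Rlt_dec t (1/2)); split; try split; try lra; reflexivity. }
    exists t. split; auto. intros p Hp.
    destruct (Hsrc p Hp) as [Rp Zp]. pose proof (HZ2 _ Zp). pose proof (HZ2 _ Zt).
    pose proof (HC p Hp) as [HL HH].
    assert (Nt : snd p <> t).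
    { intro E. unfold Vq in *. rewrite E in *.
      destruct (Bool.bool_dec (tau p) Dy) as [e|e]; [apply HL in e|apply HH in e]; lra. }
    assert (Nap : na (snd p) t) by (apply Hna2; auto).
    pose proof (Nx' p Hp) as Npx.
    split; [split; intro; contradiction|].
    assert (A1 : arrR (fst p) x <-> arrR (snd p) t).
    { rewrite arr_to_x by auto. rewrite arr_F by auto.
      destruct Vt as [Vt Dt]. rewrite Dt. unfold tau, Vq in *.
      destruct (Df (delta x (fst p))), (Df (snd p)), Dy; simpl in *;
      first [pose proof (HL eq_refl) | pose proof (HH ltac:(discriminate))];
      split; intros; try split; intros; try discriminate; try lra; auto. }
    split; [exact A1|].
    rewrite (arr_tour x (fst p)) by (auto; apply na_sym; apply Hxna; auto).
    rewrite (arr_tour t (snd p)) by (auto; apply na_sym; auto).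
    split; intros N1 N2; apply N1; apply A1; auto. }
  destruct (CL (fun p => In p ps) Uf Vq tau HK) as [O0|O1].
  - destruct (classic (exists p0, In p0 ps /\ tau p0 = false)) as [[p0 [Hp0 T0]]|NF].
    + apply (Fin false).
      * intros p q Hp Hq Tp Tq. apply O0; auto. destruct (tau q); auto; contradiction.
      * intros q Hq Tq. assert (tau q = true) by (destruct (tau q); auto; contradiction).
        pose proof (O0 p0 q Hp0 Hq T0 H). pose proof (Vf_range (snd p0) (HZ2 _ (proj2 (Hsrc p0 Hp0)))).
        unfold Vq in *. lra.
    + apply (Fin true).
      * intros p q Hp Hq Tp Tq. exfalso. apply NF. exists q. split; auto. destruct (tau q); auto; contradiction.
      * intros q Hq Tq. exfalso. apply NF. exists q. split; auto. destruct (tau q); auto; contradiction.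
  - destruct (classic (exists p0, In p0 ps /\ tau p0 = true)) as [[p0 [Hp0 T0]]|NF].
    + apply (Fin true).
      * intros p q Hp Hq Tp Tq. apply O1; auto. destruct (tau q); auto; contradiction.
      * intros q Hq Tq. assert (tau q = false) by (destruct (tau q); auto; contradiction).
        pose proof (O1 p0 q Hp0 Hq T0 H). pose proof (Vf_range (snd p0) (HZ2 _ (proj2 (Hsrc p0 Hp0)))).
        unfold Vq in *. lra.
    + apply (Fin false).
      * intros p q Hp Hq Tp Tq. exfalso. apply NF. exists q. split; auto. destruct (tau q); auto; contradiction.
      * intros q Hq Tq. exfalso. apply NF. exists q. split; auto. destruct (tau q); auto; contradiction.
Qed.

Lemma frac_one r : 1 <= r < 2 -> frac_part r = r - 1.
Proof.
  intros H. unfold frac_part, Int_part.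
  assert (up r = 2%Z) as E by (symmetry; apply tech_up; simpl; lra).
  rewrite E. simpl. lra.
Qed.

Definition refl (r : R) : R := if Req_EM_T r 0 then 0 else 1 - r.

Lemma refl_range r : 0 <= r < 1 -> 0 <= refl r < 1.
Proof. intros. unfold refl. destruct (Req_EM_T r 0); lra. Qed.

Lemma refl_inv r : 0 <= r < 1 -> refl (refl r) = r.
Proof. intros. unfold refl. destruct (Req_EM_T r 0); destruct (Req_EM_T _ 0); lra. Qed.

Lemma refl_arr r s : 0 <= r < 1 -> 0 <= s < 1 -> (arrR (refl r) (refl s) <-> arrR s r).
Proof.
  intros. rewrite !arr_char by (auto; apply refl_range; auto). unfold refl.
  destruct (Req_EM_T r 0); destruct (Req_EM_T s 0); split; intros; lra.
Qed.

Lemma na_refl s t : 0 <= s < 1 -> 0 <= t < 1 -> na (refl s) (refl t) -> na s t.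
Proof.
  unfold na, refl. intros Hs Ht [N1 N2].
  destruct (Req_EM_T s 0); destruct (Req_EM_T t 0); split; intro; lra.
Qed.

Section Pts.
Variable Zs : R -> Prop.
Hypothesis Hcirc : on_circle Zs.
Hypothesis Hdense : dense_in_circle Zs.
Hypothesis Hanti : no_antipodal Zs.

Lemma pt_eq (x y : pts Zs) : proj1_sig x = proj1_sig y -> x = y.
Proof. destruct x as [a Ha], y as [b Hb]; simpl; intros; subst. f_equal. apply proof_irrelevance. Qed.

Lemma pt_range (x : pts Zs) : 0 <= proj1_sig x < 1.
Proof. apply Hcirc. apply proj2_sig. Qed.

Lemma Zs_na s t : Zs s -> Zs t -> s <> t -> na s t.
Proof.
  intros Hs Ht N. pose proof (Hcirc _ Hs). pose proof (Hcirc _ Ht). split; intro E.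
  - apply (Hanti s t Hs Ht). destruct (Rlt_dec t (1/2)).
    + rewrite frac_pos by lra. lra.
    + rewrite frac_one by lra. lra.
  - apply (Hanti t s Ht Hs). destruct (Rlt_dec s (1/2)).
    + rewrite frac_pos by lra. lra.
    + rewrite frac_one by lra. lra.
Qed.

Lemma pt_tour (x y : pts Zs) : x <> y -> (arr x y <-> ~ arr y x).
Proof.
  intros N. unfold arr. fold (arrR (proj1_sig x) (proj1_sig y)). fold (arrR (proj1_sig y) (proj1_sig x)).
  assert (proj1_sig x <> proj1_sig y) by (intro E; apply N, pt_eq, E).
  apply arr_tour; try apply pt_range; auto. apply Zs_na; auto; apply proj2_sig.
Qed.

Lemma pt_irr (x : pts Zs) : ~ arr x x.
Proof. apply (arr_irr (proj1_sig x)). apply pt_range. Qed.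


Definition RB (rev : bool) (u v : pts Zs) : Prop := if rev then arr v u else arr u v.
Definition tgt (rev : bool) (r : R) : R := if rev then refl r else r.
Definition Z2 (rev : bool) (t : R) : Prop := 0 <= t < 1 /\ Zs (tgt rev t).

Lemma tgt_range rev r : 0 <= r < 1 -> 0 <= tgt rev r < 1.
Proof. destruct rev; simpl; auto. apply refl_range. Qed.

Lemma tgt_inv rev r : 0 <= r < 1 -> tgt rev (tgt rev r) = r.
Proof. destruct rev; simpl; auto. apply refl_inv. Qed.

Lemma tgt_inj rev r s : 0 <= r < 1 -> 0 <= s < 1 -> tgt rev r = tgt rev s -> r = s.
Proof. intros. rewrite <- (tgt_inv rev r), <- (tgt_inv rev s) by auto. congruence. Qed.

Lemma tgt_arr rev (u v : pts Zs) :
  arrR (tgt rev (proj1_sig u)) (tgt rev (proj1_sig v)) <-> RB rev u v.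
Proof. destruct rev; simpl. apply refl_arr; apply pt_range. reflexivity. Qed.

Lemma Z2_range rev t : Z2 rev t -> 0 <= t < 1.
Proof. intros [H _]; auto. Qed.

Lemma Z2_dense rev : dense_in_circle (Z2 rev).
Proof.
  destruct rev.
  - intros a b Hab. destruct (Hdense (1 - b) (1 - a)) as [t [Zt Ht]]; [lra|].
    pose proof (Hcirc _ Zt).
    exists (refl t). unfold Z2; simpl. rewrite refl_inv by auto.
    unfold refl. destruct (Req_EM_T t 0); [lra|]. repeat split; auto; lra.
  - intros a b Hab. destruct (Hdense a b Hab) as [t [Zt Ht]]. exists t.
    unfold Z2; simpl. auto.
Qed.

Lemma Z2_na rev s t : Z2 rev s -> Z2 rev t -> s <> t -> na s t.
Proof.
  intros [Rs Zs1] [Rt Zt1] N. destruct rev; simpl in *.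
  - apply na_refl; auto. apply Zs_na; auto. intro E. apply N. apply (tgt_inj true); auto.
  - apply Zs_na; auto.
Qed.

Lemma tgt_Z2 rev (y : pts Zs) : Z2 rev (tgt rev (proj1_sig y)).
Proof. split. apply tgt_range, pt_range. rewrite tgt_inv by apply pt_range. apply proj2_sig. Qed.

Lemma Z2_pt rev t : Z2 rev t -> exists y : pts Zs, tgt rev (proj1_sig y) = t.
Proof. intros [R1 Z1]. exists (exist _ (tgt rev t) Z1). simpl. apply tgt_inv; auto. Qed.

Lemma ExtP (rev : bool) (ps : list (pts Zs * pts Zs)) (x : pts Zs)
 (Heq : forall p q, In p ps -> In q ps -> (fst p = fst q <-> snd p = snd q))
 (Harr : forall p q, In p ps -> In q ps -> (arr (fst p) (fst q) <-> RB rev (snd p) (snd q))) :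
 exists y, forall p, In p ps -> (fst p = x <-> snd p = y) /\
   (arr (fst p) x <-> RB rev (snd p) y) /\ (arr x (fst p) <-> RB rev y (snd p)).
Proof.
  set (f := fun p : pts Zs * pts Zs => (proj1_sig (fst p), tgt rev (proj1_sig (snd p)))).
  assert (Pe : forall (u v : pts Zs), u = v <-> proj1_sig u = proj1_sig v).
  { intros; split; intros; [subst; auto|apply pt_eq; auto]. }
  assert (Te : forall (u v : pts Zs), u = v <-> tgt rev (proj1_sig u) = tgt rev (proj1_sig v)).
  { intros; rewrite Pe; split; intros; [congruence|apply (tgt_inj rev); auto; apply pt_range]. }
  destruct (ExtL (Z2 rev) (Z2_range rev) (Z2_dense rev) (Z2_na rev) (map f ps) (proj1_sig x) (pt_range x))
    as [y' [Zy H]].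
  - intros p Hp. apply in_map_iff in Hp as [p0 [<- Hp0]]. simpl. split. apply pt_range. apply tgt_Z2.
  - intros p q Hp Hq N. apply in_map_iff in Hp as [p0 [<- Hp0]]. apply in_map_iff in Hq as [q0 [<- Hq0]].
    simpl in *. apply Zs_na; auto; apply proj2_sig.
  - intros p Hp N. apply in_map_iff in Hp as [p0 [<- Hp0]]. simpl in *. apply Zs_na; auto; apply proj2_sig.
  - intros p q Hp Hq. apply in_map_iff in Hp as [p0 [<- Hp0]]. apply in_map_iff in Hq as [q0 [<- Hq0]].
    simpl. rewrite <- Pe, <- Te. auto.
  - intros p q Hp Hq. apply in_map_iff in Hp as [p0 [<- Hp0]]. apply in_map_iff in Hq as [q0 [<- Hq0]].
    simpl. rewrite tgt_arr. apply Harr; auto.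
  - destruct (Z2_pt rev y' Zy) as [y Ey]. exists y. intros p Hp.
    destruct (H (f p) (in_map f ps p Hp)) as [H1 [H2 H3]]. simpl in *.
    rewrite <- Ey in *. rewrite <- Pe, <- Te in H1. rewrite !tgt_arr in *.
    split; auto.
Qed.

End Pts.

Section BF.
Local Open Scope nat_scope.
Variables X Y : Type.
Variable cx : X -> nat.
Hypothesis cx_inj : forall a b, cx a = cx b -> a = b.
Variable cy : Y -> nat.
Hypothesis cy_inj : forall a b, cy a = cy b -> a = b.
Variable RX : X -> X -> Prop.
Variable RY : Y -> Y -> Prop.

Definition good (ps : list (X*Y)) : Prop :=
  (forall p q, In p ps -> In q ps -> (fst p = fst q <-> snd p = snd q)) /\
  (forall p q, In p ps -> In q ps -> (RX (fst p) (fst q) <-> RY (snd p) (snd q))).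

Hypothesis forth : forall ps, good ps -> forall x, exists y, good ((x,y)::ps).
Hypothesis back : forall ps, good ps -> forall y, exists x, good ((x,y)::ps).

Definition G := {ps | good ps}.

Definition fx (g : G) (x : X) : G :=
  let e := constructive_indefinite_description _ (forth (proj1_sig g) (proj2_sig g) x) in
  exist _ ((x, proj1_sig e) :: proj1_sig g) (proj2_sig e).
Definition fy (g : G) (y : Y) : G :=
  let e := constructive_indefinite_description _ (back (proj1_sig g) (proj2_sig g) y) in
  exist _ ((proj1_sig e, y) :: proj1_sig g) (proj2_sig e).

Definition decX (n : nat) : option X :=
  match excluded_middle_informative (exists x, cx x = n) with
  | left H => Some (proj1_sig (constructive_indefinite_description _ H))
  | right _ => None end.
Definition decY (n : nat) : option Y :=
  match excluded_middle_informative (exists y, cy y = n) with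
  | left H => Some (proj1_sig (constructive_indefinite_description _ H))
  | right _ => None end.

Lemma decX_spec x : decX (cx x) = Some x.
Proof.
  unfold decX. destruct excluded_middle_informative as [H|H].
  - f_equal. destruct constructive_indefinite_description as [z Hz]. simpl. apply cx_inj; auto.
  - exfalso; eauto.
Qed.
Lemma decY_spec y : decY (cy y) = Some y.
Proof.
  unfold decY. destruct excluded_middle_informative as [H|H].
  - f_equal. destruct constructive_indefinite_description as [z Hz]. simpl. apply cy_inj; auto.
  - exfalso; eauto.
Qed.

Definition addX (n : nat) (g : G) : G := match decX n with Some x => fx g x | None => g end.
Definition addY (n : nat) (g : G) : G := match decY n with Some y => fy g y | None => g end.

Variable g0 : G.
Fixpoint sq (n : nat) : G := match n with 0 => g0 | S n => addY n (addX n (sq n)) end.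

Lemma sq_step n p : In p (proj1_sig (sq n)) -> In p (proj1_sig (sq (S n))).
Proof.
  simpl. unfold addY, addX. intros H.
  destruct (decX n); destruct (decY n); simpl; auto.
Qed.

Lemma sq_mono n m p : n <= m -> In p (proj1_sig (sq n)) -> In p (proj1_sig (sq m)).
Proof. induction 1; auto. intros; apply sq_step; auto. Qed.

Lemma sq_X x : exists y, In (x,y) (proj1_sig (sq (S (cx x)))).
Proof.
  simpl. unfold addY, addX. rewrite decX_spec.
  set (g1 := fx (sq (cx x)) x).
  assert (exists y, In (x,y) (proj1_sig g1)) as [y Hy].
  { unfold g1, fx. simpl. eexists. left. reflexivity. }
  exists y. destruct (decY (cx x)); simpl; auto.
Qed.

Lemma sq_Y y : exists x, In (x,y) (proj1_sig (sq (S (cy y)))).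
Proof.
  simpl. unfold addY. rewrite decY_spec. unfold fy. simpl. eexists. left. reflexivity.
Qed.

Lemma sq_good n : good (proj1_sig (sq n)).
Proof. apply proj2_sig. Qed.

Lemma common n m p q : In p (proj1_sig (sq n)) -> In q (proj1_sig (sq m)) ->
  (fst p = fst q <-> snd p = snd q) /\ (RX (fst p) (fst q) <-> RY (snd p) (snd q)).
Proof.
  intros Hp Hq. destruct (sq_good (n + m)) as [A B].
  assert (Hp' : In p (proj1_sig (sq (n+m)))) by (apply (sq_mono n); auto; lia).
  assert (Hq' : In q (proj1_sig (sq (n+m)))) by (apply (sq_mono m); auto; lia).
  split; auto.
Qed.

Theorem back_and_forth : exists g : X -> Y,
  (exists h : Y -> X, (forall x, h (g x) = x) /\ (forall y, g (h y) = y)) /\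
  (forall x x', RX x x' <-> RY (g x) (g x')) /\
  (forall p, In p (proj1_sig g0) -> g (fst p) = snd p).
Proof.
  assert (EX : forall x, exists y n, In (x,y) (proj1_sig (sq n))).
  { intros x. destruct (sq_X x) as [y Hy]. eauto. }
  assert (EY : forall y, exists x n, In (x,y) (proj1_sig (sq n))).
  { intros y. destruct (sq_Y y) as [x Hx]. eauto. }
  set (g := fun x => proj1_sig (constructive_indefinite_description _ (EX x))).
  set (h := fun y => proj1_sig (constructive_indefinite_description _ (EY y))).
  assert (Hg : forall x, exists n, In (x, g x) (proj1_sig (sq n))).
  { intros x. unfold g. destruct constructive_indefinite_description; simpl; auto. }
  assert (Hh : forall y, exists n, In (h y, y) (proj1_sig (sq n))).
  { intros y. unfold h. destruct constructive_indefinite_description; simpl; auto. }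
  exists g. split; [exists h; split|split].
  - intros x. destruct (Hg x) as [n Hn]. destruct (Hh (g x)) as [m Hm].
    destruct (common _ _ _ _ Hn Hm) as [E _]. simpl in E. symmetry. apply E. reflexivity.
  - intros y. destruct (Hh y) as [n Hn]. destruct (Hg (h y)) as [m Hm].
    destruct (common _ _ _ _ Hn Hm) as [E _]. simpl in E. symmetry. apply E. reflexivity.
  - intros x x'. destruct (Hg x) as [n Hn]. destruct (Hg x') as [m Hm].
    destruct (common _ _ _ _ Hn Hm) as [_ E]. exact E.
  - intros p Hp. destruct (Hg (fst p)) as [n Hn].
    assert (H0 : In p (proj1_sig (sq 0))) by exact Hp.
    destruct (common _ _ _ _ Hn H0) as [E _]. simpl in E. apply E. reflexivity.
Qed.
End BF.
Open Scope R_scope.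

Section Main.
Variable Zs : R -> Prop.
Hypothesis Hcirc : on_circle Zs.
Hypothesis Hdense : dense_in_circle Zs.
Hypothesis Hanti : no_antipodal Zs.

Lemma pe (P Q : Prop) : (P <-> Q) -> P = Q.
Proof. apply propositional_extensionality. Qed.
Lemma s1 : (~True) = False. Proof. apply pe; tauto. Qed.
Lemma s2 : (~False) = True. Proof. apply pe; tauto. Qed.
Lemma s3 P : (True /\ P) = P. Proof. apply pe; tauto. Qed.
Lemma s4 P : (P /\ True) = P. Proof. apply pe; tauto. Qed.
Lemma s5 P : (False /\ P) = False. Proof. apply pe; tauto. Qed.
Lemma s6 P : (P /\ False) = False. Proof. apply pe; tauto. Qed.
Lemma s7 P : (True \/ P) = True. Proof. apply pe; tauto. Qed.
Lemma s8 P : (P \/ True) = True. Proof. apply pe; tauto. Qed.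
Lemma s9 P : (False \/ P) = P. Proof. apply pe; tauto. Qed.
Lemma s10 P : (P \/ False) = P. Proof. apply pe; tauto. Qed.
Lemma s11 P : (True <-> P) = P. Proof. apply pe; tauto. Qed.
Lemma s12 P : (P <-> True) = P. Proof. apply pe; tauto. Qed.
Lemma s13 P : (False <-> P) = ~P. Proof. apply pe; tauto. Qed.
Lemma s14 P : (P <-> False) = ~P. Proof. apply pe; tauto. Qed.
Ltac simp := repeat (rewrite ?s1, ?s2, ?s3, ?s4, ?s5, ?s6, ?s7, ?s8, ?s9, ?s10, ?s11, ?s12, ?s13, ?s14 in *).

Ltac settle A :=
  let HA := fresh "HA" in let E := fresh "E" in
  destruct (classic A) as [HA|HA];
  [ assert (E: A = True) by (apply propositional_extensionality; split; auto)
  | assert (E: A = False) by (apply propositional_extensionality; split; [exact HA | intros []]) ];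
  rewrite E in *; clear E HA.

Lemma tri3 (g : pts Zs -> pts Zs) (x y z : pts Zs)
  (Nxy : x <> y) (Nyz : y <> z) (Nxz : x <> z)
  (Gxy : g x <> g y) (Gyz : g y <> g z) (Gxz : g x <> g z)
  (HR : forall a b c, (a = x \/ a = y \/ a = z) -> (b = x \/ b = y \/ b = z) -> (c = x \/ c = y \/ c = z) ->
        (Rel a b c <-> Rel (g a) (g b) (g c))) :
  ((arr x y <-> arr (g x) (g y)) <-> (arr y z <-> arr (g y) (g z))).
Proof.
  pose proof (HR x y z ltac:(auto) ltac:(auto) ltac:(auto)) as R1.
  pose proof (HR y x z ltac:(auto) ltac:(auto) ltac:(auto)) as R2.
  pose proof (HR z x y ltac:(auto) ltac:(auto) ltac:(auto)) as R3.
  clear HR. unfold Rel in *.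
  rewrite (pt_tour Zs Hcirc Hanti y x (not_eq_sym Nxy)) in *.
  rewrite (pt_tour Zs Hcirc Hanti z y (not_eq_sym Nyz)) in *.
  rewrite (pt_tour Zs Hcirc Hanti z x (not_eq_sym Nxz)) in *.
  rewrite (pt_tour Zs Hcirc Hanti (g y) (g x) (not_eq_sym Gxy)) in *.
  rewrite (pt_tour Zs Hcirc Hanti (g z) (g y) (not_eq_sym Gyz)) in *.
  rewrite (pt_tour Zs Hcirc Hanti (g z) (g x) (not_eq_sym Gxz)) in *.
  settle (arr x y); settle (arr y z); settle (arr x z);
  settle (arr (g x) (g y)); settle (arr (g y) (g z)); settle (arr (g x) (g z)). all: simp; tauto.
Qed.

Lemma tri_pres (P : pts Zs -> Prop) (g : pts Zs -> pts Zs)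
 (Hinj : forall x y, P x -> P y -> g x = g y -> x = y)
 (HR : forall x y z, P x -> P y -> P z -> (Rel x y z <-> Rel (g x) (g y) (g z))) :
 (forall x y, P x -> P y -> x <> y -> (arr x y <-> arr (g x) (g y))) \/
 (forall x y, P x -> P y -> x <> y -> (arr x y <-> arr (g y) (g x))).
Proof.
  set (S := fun x y => arr x y <-> arr (g x) (g y)).
  assert (Gn : forall x y, P x -> P y -> x <> y -> g x <> g y) by (intros x y Px Py N E; apply N; auto).
  assert (Tri : forall x y z, P x -> P y -> P z -> x <> y -> y <> z -> x <> z -> (S x y <-> S y z)).
  { intros x y z Px Py Pz N1 N2 N3. apply tri3; auto.
    intros a b c Ha Hb Hc. apply HR; [destruct Ha as [->|[->| ->]] | destruct Hb as [->|[->| ->]] | destruct Hc as [->|[->| ->]]]; auto. }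
  assert (Sym : forall x y, P x -> P y -> x <> y -> (S x y <-> S y x)).
  { intros x y Px Py N. unfold S.
    rewrite (pt_tour Zs Hcirc Hanti x y N), (pt_tour Zs Hcirc Hanti (g x) (g y) (Gn x y Px Py N)). tauto. }
  assert (All : forall a b c d, P a -> P b -> P c -> P d -> a <> b -> c <> d -> (S a b <-> S c d)).
  { intros a b c d Pa Pb Pc Pd Nab Ncd.
    destruct (classic (c = a)) as [->|Nca].
    - destruct (classic (d = b)) as [->|Ndb]; [tauto|].
      rewrite (Sym a b) by auto. apply Tri; auto.
    - destruct (classic (c = b)) as [->|Ncb].
      + destruct (classic (d = a)) as [->|Nda]; [apply Sym; auto|]. apply Tri; auto.
      + rewrite (Tri a b c) by auto.
        destruct (classic (d = b)) as [->|Ndb]; [apply Sym; auto|]. apply Tri; auto. }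
  destruct (classic (exists x0 y0, P x0 /\ P y0 /\ x0 <> y0 /\ ~ S x0 y0)) as [[x0 [y0 [P0 [P1 [N0 NS]]]]]|NE].
  - right. intros x y Px Py N. assert (~ S x y) by (rewrite (All x y x0 y0); auto).
    unfold S in H. rewrite (pt_tour Zs Hcirc Hanti (g y) (g x) (Gn y x Py Px (not_eq_sym N))).
    destruct (classic (arr x y)); destruct (classic (arr (g x) (g y))); tauto.
  - left. intros x y Px Py N. destruct (classic (S x y)) as [H|H]; auto.
    exfalso. apply NE. exists x, y. auto.
Qed.

Lemma pres_all (g : pts Zs -> pts Zs) :
  (forall x y, x <> y -> (arr x y <-> arr (g x) (g y))) -> forall x y, arr x y <-> arr (g x) (g y).
Proof.
  intros H x y. destruct (classic (x = y)) as [E|N]; [subst y|auto].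
  split; intro Q; exfalso; [apply (pt_irr Zs Hcirc x Q) | apply (pt_irr Zs Hcirc (g x) Q)].
Qed.

Lemma rev_all (g : pts Zs -> pts Zs) :
  (forall x y, x <> y -> (arr x y <-> arr (g y) (g x))) -> forall x y, arr x y <-> arr (g y) (g x).
Proof.
  intros H x y. destruct (classic (x = y)) as [E|N]; [subst y|auto].
  split; intro Q; exfalso; [apply (pt_irr Zs Hcirc x Q) | apply (pt_irr Zs Hcirc (g x) Q)].
Qed.

Lemma part1 (g : pts Zs -> pts Zs) : in_H g <-> is_autR g.
Proof.
  split.
  - intros [Hp [A|A]]; split; auto; intros x y z.
    + pose proof (pres_all g A) as B. unfold Rel. rewrite (B y x), (B y z), (B x z), (B z x), (B z y), (B x y). tauto.
    + pose proof (rev_all g A) as B. unfold Rel. rewrite (B y x), (B y z), (B x z), (B z x), (B z y), (B x y). tauto.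
  - intros [Hp HR]. split; auto.
    destruct Hp as [h [H1 H2]].
    destruct (tri_pres (fun _ => True) g) as [A|A].
    + intros x y _ _ E. rewrite <- (H1 x), <- (H1 y), E. reflexivity.
    + intros; auto.
    + left; intros; apply A; auto.
    + right; intros; apply A; auto.
Qed.

End Main.

Lemma good_cons {X Y : Type} (RX : X -> X -> Prop) (RY : Y -> Y -> Prop) ps x y :
  good X Y RX RY ps ->
  (forall p, In p ps -> (fst p = x <-> snd p = y)) ->
  (forall p, In p ps -> (RX (fst p) x <-> RY (snd p) y)) ->
  (forall p, In p ps -> (RX x (fst p) <-> RY y (snd p))) ->
  (RX x x <-> RY y y) -> good X Y RX RY ((x,y)::ps).
Proof.
  intros [A B] H1 H2 H3 H4. split.
  - intros p q [<-|Hp] [<-|Hq]; simpl.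
    + split; auto.
    + pose proof (H1 q Hq) as H. split; intro E; symmetry; apply H; symmetry; exact E.
    + apply H1; auto.
    + apply A; auto.
  - intros p q [<-|Hp] [<-|Hq]; simpl.
    + auto.
    + apply H3; auto.
    + apply H2; auto.
    + apply B; auto.
Qed.

Section Main2.
Variable Zs : R -> Prop.
Hypothesis Hcirc : on_circle Zs.
Hypothesis Hdense : dense_in_circle Zs.
Hypothesis Hanti : no_antipodal Zs.

Lemma RB_irr rev (y : pts Zs) : ~ RB Zs rev y y.
Proof. destruct rev; simpl; apply pt_irr; auto. Qed.

Lemma forth_ok rev ps : good _ _ (@arr Zs) (RB Zs rev) ps -> forall x, exists y, good _ _ (@arr Zs) (RB Zs rev) ((x,y)::ps).
Proof.
  intros [A B] x. destruct (ExtP Zs Hcirc Hdense Hanti rev ps x A B) as [y Hy].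
  exists y. apply good_cons.
  - split; auto.
  - intros p Hp; apply Hy; auto.
  - intros p Hp; apply Hy; auto.
  - intros p Hp; apply Hy; auto.
  - split; intro Q; exfalso; [apply (pt_irr Zs Hcirc x Q) | apply (RB_irr rev y Q)].
Qed.

Lemma back_ok rev ps : good _ _ (@arr Zs) (RB Zs rev) ps -> forall y, exists x, good _ _ (@arr Zs) (RB Zs rev) ((x,y)::ps).
Proof.
  intros [A B] y.
  set (sw := fun p : pts Zs * pts Zs => (snd p, fst p)).
  assert (A' : forall p q, In p (map sw ps) -> In q (map sw ps) -> (fst p = fst q <-> snd p = snd q)).
  { intros p q Hp Hq. apply in_map_iff in Hp as [p0 [<- Hp0]]. apply in_map_iff in Hq as [q0 [<- Hq0]].
    simpl. rewrite (A p0 q0); tauto. }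
  assert (B' : forall p q, In p (map sw ps) -> In q (map sw ps) -> (arr (fst p) (fst q) <-> RB Zs rev (snd p) (snd q))).
  { intros p q Hp Hq. apply in_map_iff in Hp as [p0 [<- Hp0]]. apply in_map_iff in Hq as [q0 [<- Hq0]].
    simpl. destruct rev; simpl in *.
    - rewrite (B q0 p0); auto. tauto.
    - rewrite (B p0 q0); auto. tauto. }
  destruct (ExtP Zs Hcirc Hdense Hanti rev (map sw ps) y A' B') as [x Hx].
  exists x. apply good_cons.
  - split; auto.
  - intros p Hp. destruct (Hx (sw p) (in_map sw ps p Hp)) as [H1 _]. simpl in H1. tauto.
  - intros p Hp. destruct (Hx (sw p) (in_map sw ps p Hp)) as [_ [H2 H3]]. simpl in *.
    destruct rev; simpl in *; tauto.
  - intros p Hp. destruct (Hx (sw p) (in_map sw ps p Hp)) as [_ [H2 H3]]. simpl in *.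
    destruct rev; simpl in *; tauto.
  - split; intro Q; exfalso; [apply (pt_irr Zs Hcirc x Q) | apply (RB_irr rev y Q)].
Qed.

Lemma part2 (Hcount : countable_set Zs) (l : list (pts Zs)) (f : pts Zs -> pts Zs) :
  fin_partial_iso l f -> exists g, is_autR g /\ (forall x, In x l -> g x = f x).
Proof.
  destruct Hcount as [c Hc]. intros [Hinj HR].
  assert (Hrev : exists rev : bool, forall x y, In x l -> In y l -> (arr x y <-> RB Zs rev (f x) (f y))).
  { destruct (tri_pres Zs Hcirc Hanti (fun x => In x l) f Hinj HR) as [A|A]; [exists false | exists true];
      intros x y Hx Hy; (destruct (classic (x = y)) as [E|N]; [subst y | apply A; auto]);
      (split; intro Q; exfalso; [apply (pt_irr Zs Hcirc x Q) | apply (RB_irr _ (f x) Q)]). }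
  destruct Hrev as [rev Hrev].
  set (ps0 := map (fun x => (x, f x)) l).
  assert (G0 : good _ _ (@arr Zs) (RB Zs rev) ps0).
  { split; intros p q Hp Hq; apply in_map_iff in Hp as [p0 [<- Hp0]]; apply in_map_iff in Hq as [q0 [<- Hq0]]; simpl.
    - split; intro E; [congruence | apply Hinj; auto].
    - apply Hrev; auto. }
  destruct (back_and_forth _ _ c Hc c Hc (@arr Zs) (RB Zs rev) (forth_ok rev) (back_ok rev) (exist _ ps0 G0))
    as [g [Hp [Ha He]]].
  exists g. split.
  - apply part1; auto. split; auto. destruct rev; simpl in *; [right|left]; intros; apply Ha.
  - intros x Hx. apply (He (x, f x)). simpl. apply in_map_iff. exists x. auto.
Qed.
End Main2.

Theorem lemma3p12 (Zs : R -> Prop)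
  (Hcirc : on_circle Zs) (Hcount : countable_set Zs)
  (Hdense : dense_in_circle Zs) (Hanti : no_antipodal Zs) :
  (forall g : pts Zs -> pts Zs, in_H g <-> is_autR g) /\
  (forall (l : list (pts Zs)) (f : pts Zs -> pts Zs),
     fin_partial_iso l f ->
     exists g : pts Zs -> pts Zs, is_autR g /\ (forall x, In x l -> g x = f x)).
Proof.
  split.
  - apply part1; auto.
  - apply part2; auto.
Qed.
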